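(* Let $G=(V,E)$ be a claw-free graph, let $v_1,v_2\in V$ with $v_1v_2\notin E$, and let $w_1,w_2\in N(v_1)\cap N(v_2)$ with $w_1w_2\notin E$. Then $N[v_1]\cup N[v_2]=N[w_1]\cup N[w_2]$.
   Context: Graphs are finite, simple, undirected; claw-free means no induced $K_{1,3}$. $N(x)$ is the open and $N[x]=N(x)\cup\{x\}$ the closed neighbourhood of $x$. *)

(* Defs.v *)
From mathcomp Require Import all_boot.
Set Implicit Arguments. Unset Strict Implicit. Unset Printing Implicit Defensive.

Definition simple_graph (T : finType) (e : rel T) : Prop :=
  symmetric e /\ irreflexive e.

Definition nbhd (T : finType) (e : rel T) (x : T) : {set T} := [set y | e x y].
Definition cnbhd (T : finType) (e : rel T) (x : T) : {set T} := x |: nbhd e x.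

Definition claw_free (T : finType) (e : rel T) : Prop :=
  forall c a b d : T, e c a -> e c b -> e c d ->
    a != b -> a != d -> b != d ->
    ~~ e a b -> ~~ e a d -> ~~ e b d -> False.

(* Main.v *)
Require Import Defs.
From mathcomp Require Import all_boot.

Lemma aux (T : finType) (e : rel T) :
  simple_graph e -> claw_free e ->
  forall c a b x : T, e c a -> e c b -> a != b -> ~~ e a b ->
  x \in cnbhd e c -> x \in cnbhd e a :|: cnbhd e b.
Proof.
move=> [sym irr] cf c a b x ca cb ab nab.
rewrite /cnbhd !inE => /orP [/eqP -> | cx].
  by rewrite sym ca orbT.
case xa: (x == a); first by [].
case xb: (x == b); first by rewrite orbT.
case eax: (e a x); first by rewrite orbT.
case ebx: (e b x); first by rewrite !orbT.
exfalso; apply: (cf c x a b cx ca cb).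
- by apply/negP => /eqP Hx; move: xa; rewrite Hx eqxx.
- by rewrite xb.
- by [].
- by rewrite sym eax.
- by rewrite sym ebx.
- by [].
Qed.

Theorem lemma7 (T : finType) (e : rel T) :
  simple_graph e -> claw_free e ->
  forall v1 v2 w1 w2 : T,
    v1 != v2 -> ~~ e v1 v2 ->
    w1 \in nbhd e v1 :&: nbhd e v2 -> w2 \in nbhd e v1 :&: nbhd e v2 ->
    w1 != w2 -> ~~ e w1 w2 ->
    cnbhd e v1 :|: cnbhd e v2 = cnbhd e w1 :|: cnbhd e w2.
Proof.
move=> sg cf v1 v2 w1 w2 v12 nv12 hw1 hw2 w12 nw12.
have [sym _] := sg.
move: hw1 hw2; rewrite /nbhd !inE => /andP [a1 a2] /andP [b1 b2].
apply/setP => x; apply/idP/idP => /setUP [] hx.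
- exact: (aux _ _ sg cf _ _ _ _ a1 b1 w12 nw12 hx).
- exact: (aux _ _ sg cf _ _ _ _ a2 b2 w12 nw12 hx).
- by apply: (aux _ _ sg cf _ _ _ _ _ _ v12 nv12 hx); rewrite sym.
- by apply: (aux _ _ sg cf _ _ _ _ _ _ v12 nv12 hx); rewrite sym.
Qed.
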